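(* Let $a_1,\dots,a_k$ be black-box optimization algorithms in the BBoxER framework described in the context, let $b$ be a budget divisible by $k$, and let $\mathrm{bet\text{-}and\text{-}run}(a_1,\dots,a_k)$ be the algorithm which, with seed $\omega$ split into seeds $\omega^1,\dots,\omega^k$, runs each $a_i$ independently with seed $\omega^i$ and budget $b/k$ on the same dataset, obtaining recommendations $\widehat x_1,\dots,\widehat x_k$, and outputs the $\widehat x_i$ minimizing the empirical loss $\widehat L(\widehat x_i)$. Then $$N\big(\omega,\mathrm{bet\text{-}and\text{-}run}(a_1,\dots,a_k),b\big)\le \sum_{i=1}^k N(\omega^i,a_i,b/k).$$
   Context: BBoxER framework: an initial model $m_0$ and a map $x\mapsto\mathrm{modified}(m_0,x)$; $\mathcal D$ is the class of possible datasets. An algorithm $a$, deterministic given its seed $\omega$, run with budget $b$ on $D\in\mathcal D$, at each iteration $i$ proposes $x_i$, declares finitely many $k_i$ comparison outcomes, and receives $\mathrm{choice}_i\in\{1,\dots,k_i\}$ computed by comparing the proposed models on $D$; finally it recommends $\widehat x$, a deterministic function of $(\omega,a,b,\mathrm{choice}_1,\dots,\mathrm{choice}_b)$. For an algorithm with seed $\omega$ and budget $b$, $N(\omega,a,b)$ denotes the number of distinct possible outcomes (internal states determining the output) as $D$ ranges over $\mathcal D$, i.e. $N(\omega,a,b)=\operatorname{Card}\{S(\omega,D,a,b):D\in\mathcal D\}$ with $S(\omega,D,a,b)=(\omega,\mathrm{choice}_1,\dots,\mathrm{choice}_b)$. $\widehat L$ denotes empirical loss on $D$. *)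

(* Defs.v *)
From HB Require Import structures.
From mathcomp Require Import all_boot all_order all_algebra.
From mathcomp Require Import boolp classical_sets functions cardinality.
From mathcomp Require Export finmap.
Set Implicit Arguments. Unset Strict Implicit. Unset Printing Implicit Defensive.
Import Order.TTheory GRing.Theory Num.Theory.
Local Open Scope classical_set_scope.

(*   Omega : seeds, X : search space (x |-> modified(m0,x)), Dat : datasets. *)
(*   An algorithm is deterministic given its seed and budget: at iteration i *)
(*   it proposes, from the previous choices, a point x_i and a number of      *)
(*   comparison outcomes k_i (encoded as k.+1, so there are k.+1 >= 1        *)
(*   outcomes, numbered 0..k), and finally recommends a point from the       *)
(*   seed, the budget and the sequence of choices.                           *)
(*   The dataset D enters only through a comparison procedure                *)
(*   cmp D : seq X -> forall k, 'I_k.+1, computing choice_i by comparing the *)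
(*   proposed models (x_1..x_i) on D.                                        *)

Record bbalgo (Omega X : Type) := BBAlgo {
  bb_propose : Omega -> nat -> seq nat -> X * nat;
  bb_recommend : Omega -> nat -> seq nat -> X }.

Section Framework.
Variables (Omega X : Type).
Variable (Dat : Type).
Variable cmp : Dat -> seq X -> forall k : nat, 'I_k.+1.

Fixpoint run_hist (a : bbalgo Omega X) (w : Omega) (b : nat) (D : Dat) (n : nat)
  : seq X * seq nat :=
  if n is n'.+1 then
    let h := run_hist a w b D n' in
    let p := bb_propose a w b h.2 in
    let xs := rcons h.1 p.1 in
    (xs, rcons h.2 (nat_of_ord (cmp D xs p.2)))
  else ([::], [::]).

Definition choices a w D b : seq nat := (run_hist a w b D b).2.

Definition Sstate a w D b : Omega * seq nat := (w, choices a w D b).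

Definition recommendation a w D b : X := bb_recommend a w b (choices a w D b).

End Framework.

Definition Nout (Omega : choiceType) (X Dat : Type)
  (cmp : Dat -> seq X -> forall k : nat, 'I_k.+1) (Dclass : set Dat)
  (a : bbalgo Omega X) (w : Omega) (b : nat) : nat :=
  #|` fset_set [set Sstate cmp a w D b | D in Dclass] |.

Section BetAndRun.
Variables (Omega0 : Type) (Omega X Dat : Type) (R : realDomainType).
Variable cmp : Dat -> seq X -> forall k : nat, 'I_k.+1.
Variable Lhat : Dat -> X -> R.
Variables (k : nat) (hk : 0 < k).
Variable algs : 'I_k -> bbalgo Omega X.
Variable split : Omega0 -> 'I_k -> Omega.

Definition bar_rec (w : Omega0) (D : Dat) (b : nat) (i : 'I_k) : X :=
  recommendation cmp (algs i) (split w i) D (b %/ k).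

Definition bar_winner (w : Omega0) (D : Dat) (b : nat) : 'I_k :=
  Order.arg_min (Ordinal hk) xpredT (fun i => Lhat D (bar_rec w D b i)).

Definition bar_output (w : Omega0) (D : Dat) (b : nat) : X :=
  bar_rec w D b (bar_winner w D b).

(* the internal state of bet-and-run determining its output: the seed, the   *)
(* index of the selected run, and the choices of that run                    *)
Definition bar_state (w : Omega0) (D : Dat) (b : nat) : Omega0 * ('I_k * seq nat) :=
  let i := bar_winner w D b in (w, (i, choices cmp (algs i) (split w i) D (b %/ k))).

End BetAndRun.

Definition Nbar (Omega0 Omega : choiceType) (X Dat : Type) (R : realDomainType)
  (cmp : Dat -> seq X -> forall k : nat, 'I_k.+1) (Lhat : Dat -> X -> R)
  (Dclass : set Dat) (k : nat) (hk : 0 < k) (algs : 'I_k -> bbalgo Omega X)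
  (split : Omega0 -> 'I_k -> Omega) (w : Omega0) (b : nat) : nat :=
  #|` fset_set [set bar_state cmp Lhat hk algs split w D b | D in Dclass] |.

(* Main.v *)
Require Import Defs.
From HB Require Import structures.
From mathcomp Require Import all_boot all_order all_algebra.
From mathcomp Require Import boolp classical_sets functions cardinality.
Import Order.TTheory GRing.Theory Num.Theory.

Set Implicit Arguments. Unset Strict Implicit.
Local Open Scope classical_set_scope.

Fixpoint tree (Omega X : Type) (a : bbalgo Omega X) w b n : seq (seq nat) :=
  if n is n'.+1 then
    flatten [seq [seq rcons s j | j <- iota 0 (bb_propose a w b s).2.+1]
            | s <- tree a w b n']
  else [:: [::]].

Lemma run_hist_tree (Omega X Dat : Type)
  (cmp : Dat -> seq X -> forall k : nat, 'I_k.+1) (a : bbalgo Omega X) (w : Omega) b D n :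
  (run_hist cmp a w b D n).2 \in tree a w b n.
Proof.
elim: n => [|n IH]; first by rewrite inE.
apply/flatten_mapP; exists (run_hist cmp a w b D n).2; first exact: IH.
rewrite [run_hist _ _ _ _ _ n.+1]/=.
apply: (map_f (fun j => rcons (run_hist cmp a w b D n).2 j)).
rewrite mem_iota add0n; exact: ltn_ord.
Qed.

Lemma Sstate_finite (Omega : choiceType) (X Dat : Type)
  (cmp : Dat -> seq X -> forall k : nat, 'I_k.+1) (Dclass : set Dat) (a : bbalgo Omega X) (w : Omega) b :
  finite_set [set Sstate cmp a w D b | D in Dclass].
Proof.
apply: (sub_finite_set _ (finite_seq [seq (w, s) | s <- tree a w b b])).
move=> _ [D _ <-] /=; apply: map_f; exact: run_hist_tree.
Qed.

Lemma card_bigfcup (I : Type) (T : choiceType) (r : seq I) (F : I -> {fset T}) :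
  (#|` (\bigcup_(i <- r) F i)%fset| <= \sum_(i <- r) #|` F i|)%N.
Proof.
elim: r => [|i r IH]; first by rewrite !big_nil cardfs0.
rewrite !big_cons; apply: leq_trans (leq_card_fsetU _ _) _.
by rewrite leq_add2l.
Qed.

Theorem theorem4 (Omega0 Omega : choiceType) (X Dat : Type) (R : realDomainType)
  (cmp : Dat -> seq X -> forall k : nat, 'I_k.+1) (Lhat : Dat -> X -> R)
  (Dclass : set Dat) (k : nat) (hk : 0 < k) (algs : 'I_k -> bbalgo Omega X)
  (split : Omega0 -> 'I_k -> Omega) (w : Omega0) (b : nat) :
  k %| b ->
  Nbar cmp Lhat Dclass hk algs split w b <=
    \sum_(i < k) Nout cmp Dclass (algs i) (split w i) (b %/ k).
Proof.
move=> _.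
pose S i := [set Sstate cmp (algs i) (split w i) D (b %/ k) | D in Dclass].
pose f (i : 'I_k) (p : Omega * seq nat) := (w, (i, p.2)).
pose G := (\bigcup_(i <- enum 'I_k) (f i @` fset_set (S i)))%fset.
have sub : [set bar_state cmp Lhat hk algs split w D b | D in Dclass] `<=` [set` G].
  move=> _ [D HD <-] /=; apply/bigfcupP.
  exists (bar_winner cmp Lhat hk algs split w D b); first by rewrite mem_enum.
  apply/imfsetP; exists (Sstate cmp (algs (bar_winner cmp Lhat hk algs split w D b))
     (split w (bar_winner cmp Lhat hk algs split w D b)) D (b %/ k)) => //.
  rewrite in_fset_set; last exact: Sstate_finite.
  by apply/mem_set; exists D.
have fin := finite_subfset G sub.
rewrite /Nbar.
apply: leq_trans (fsubset_leq_card (_ : fset_set _ `<=` G)%fset) _.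
  apply/fsubsetP => x; rewrite in_fset_set // => /set_mem /sub; exact.
apply: leq_trans (card_bigfcup _ _) _; rewrite big_enum /=.
apply: leq_sum => i _; exact: leq_imfset_card.
Qed.
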